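(* For all $t\in\mathbb N$ we have $\lvert v_t^\alpha-v_t^\beta\rvert\le 48$.
   Context: Let $\mathsf r(n)$ be the number of (overlapping) occurrences of $\mathtt{11}$ in the binary expansion of $n\in\mathbb N=\{0,1,\dots\}$, and $d(t,n)=\mathsf r(n+t)-\mathsf r(n)$. Let $a_t(k)$, $b_t(k)$ ($k\in\mathbb Z$) be the asymptotic densities (which exist and define probability distributions on $\mathbb Z$) of $\{n:d(t,2n)=k\}$ and $\{n:d(t,2n+1)=k\}$. Let $v_t^\alpha$ and $v_t^\beta$ denote the variances of the distributions $a_t$ and $b_t$ respectively. *)

(* Defs.v *)
From Stdlib Require Import Reals ZArith Arith List Lia Lra.
From Coquelicot Require Import Coquelicot.
Open Scope R_scope.

(* r n = number of (overlapping) occurrences of 11 in the binary expansion of n,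
   i.e. the number of positions i with bits i and i+1 of n both equal to 1.
   Since n < 2^n, only positions i < n can contribute. *)
Definition r (n : nat) : nat :=
  length (filter (fun i => andb (Nat.testbit n i) (Nat.testbit n (S i))) (seq 0 n)).

Definition d (t n : nat) : Z := (Z.of_nat (r (n + t)) - Z.of_nat (r n))%Z.

Definition density (P : nat -> bool) : R :=
  real (Lim_seq (fun N => INR (length (filter P (seq 0 N))) / INR N)).

Definition a_dist (t : nat) (k : Z) : R := density (fun n => Z.eqb (d t (2 * n)) k).
Definition b_dist (t : nat) (k : Z) : R := density (fun n => Z.eqb (d t (2 * n + 1)) k).

Definition sumZ (f : Z -> R) : R :=
  Series (fun m => f (Z.of_nat m)) + Series (fun m => f (- Z.of_nat m - 1)%Z).

Definition meanZ (p : Z -> R) : R := sumZ (fun k => IZR k * p k).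
Definition varZ (p : Z -> R) : R := sumZ (fun k => (IZR k - meanZ p) ^ 2 * p k).

Definition v_alpha (t : nat) : R := varZ (a_dist t).
Definition v_beta (t : nat) : R := varZ (b_dist t).

(* Main.v *)
Require Import Defs.
From Stdlib Require Import Reals ZArith Arith List Lia Lra FunctionalExtensionality.
From Coquelicot Require Import Coquelicot.
Open Scope R_scope.

Definition pr (n i : nat) : bool := andb (Nat.testbit n i) (Nat.testbit n (S i)).
Definition rr (L n : nat) : nat := length (filter (pr n) (seq 0 L)).

Lemma filter_map_S (p : nat -> bool) (l : list nat) :
  length (filter p (map S l)) = length (filter (fun i => p (S i)) l).
Proof. induction l; simpl; auto. destruct (p (S a)); simpl; auto. Qed.

Lemma rr_S_even L m : rr (S L) (2 * m) = rr L m.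
Proof.
  unfold rr. change (seq 0 (S L)) with (0%nat :: seq 1 L).
  assert (H0 : pr (2*m) 0 = false) by (unfold pr; rewrite Nat.testbit_even_0; auto).
  cbn [filter]. rewrite H0.
  rewrite <- seq_shift, filter_map_S. f_equal. apply filter_ext. intro i.
  unfold pr. rewrite !Nat.double_bits_succ. reflexivity.
Qed.

Lemma rr_S_odd L m : rr (S L) (2 * m + 1) = ((if Nat.odd m then 1 else 0) + rr L m)%nat.
Proof.
  unfold rr. change (seq 0 (S L)) with (0%nat :: seq 1 L).
  assert (H0 : pr (2*m+1) 0 = Nat.odd m).
  { unfold pr; rewrite Nat.testbit_odd_0. pose proof (Nat.testbit_odd_succ m 0 ltac:(lia)) as HH. change (Nat.succ 0) with 1%nat in HH. rewrite HH. rewrite Nat.bit0_odd; auto. }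
  cbn [filter]. rewrite H0.
  assert (E: length (filter (pr (2*m+1)) (seq 1 L)) = length (filter (pr m) (seq 0 L))).
  { rewrite <- seq_shift, filter_map_S. f_equal. apply filter_ext. intro i. unfold pr. rewrite !(Nat.testbit_odd_succ m) by lia. reflexivity. }
  destruct (Nat.odd m); cbn [length]; rewrite E; reflexivity.
Qed.

Lemma testbit_big n i : (n <= i)%nat -> Nat.testbit n i = false.
Proof.
  intros H. destruct n. apply Nat.bits_0.
  apply Nat.bits_above_log2. pose proof (Nat.log2_lt_lin (S n)). lia.
Qed.

Lemma filter_len0 {A} (p : A -> bool) l : (forall x, In x l -> p x = false) -> length (filter p l) = 0%nat.
Proof. induction l; simpl; intros H; auto. rewrite H by auto. apply IHl. auto. Qed.

Lemma rr_ext L n : (n <= L)%nat -> rr L n = r n.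
Proof.
  intros H. unfold r, rr. replace L with (n + (L - n))%nat by lia.
  rewrite seq_app, filter_app, length_app.
  assert (length (filter (pr n) (seq (0 + n) (L - n))) = 0%nat).
  { apply filter_len0. intros x Hx. apply in_seq in Hx.
    unfold pr. rewrite testbit_big by lia. auto. }
  unfold pr in *. lia.
Qed.

Lemma r_even m : r (2 * m) = r m.
Proof. rewrite <- (rr_ext (S (2*m))) by lia. rewrite rr_S_even. apply rr_ext. lia. Qed.

Lemma r_odd m : r (2 * m + 1) = ((if Nat.odd m then 1 else 0) + r m)%nat.
Proof. rewrite <- (rr_ext (S (2*m+1))) by lia. rewrite rr_S_odd. rewrite rr_ext by lia. auto. Qed.

Definition od (n : nat) : Z := if Nat.odd n then 1%Z else 0%Z.

Lemma r_odd_Z m : Z.of_nat (r (2 * m + 1)) = (od m + Z.of_nat (r m))%Z.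
Proof. rewrite r_odd. unfold od. destruct (Nat.odd m); lia. Qed.

Lemma E1 s n : d (2 * s) (2 * n) = d s n.
Proof. unfold d. replace (2*n + 2*s)%nat with (2*(n+s))%nat by lia. rewrite !r_even. reflexivity. Qed.

Lemma E2 s n : d (2 * s) (2 * n + 1) = (d s n + od (n + s) - od n)%Z.
Proof. unfold d. replace (2*n+1 + 2*s)%nat with (2*(n+s)+1)%nat by lia. rewrite !r_odd_Z. lia. Qed.

Lemma E3 s n : d (2 * s + 1) (2 * n) = (d s n + od (n + s))%Z.
Proof. unfold d. replace (2*n + (2*s+1))%nat with (2*(n+s)+1)%nat by lia. rewrite r_odd_Z, r_even. lia. Qed.

Lemma E4 s n : d (2 * s + 1) (2 * n + 1) = (d (s + 1) n - od n)%Z.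
Proof. unfold d. replace (2*n+1 + (2*s+1))%nat with (2*(n+(s+1)))%nat by lia. rewrite r_odd_Z, r_even. lia. Qed.

Lemma od_even m : od (2 * m) = 0%Z.
Proof. unfold od. rewrite Nat.odd_mul. simpl. auto. Qed.
Lemma od_odd m : od (2 * m + 1) = 1%Z.
Proof. unfold od. replace (2*m+1)%nat with (1 + 2*m)%nat by lia. rewrite Nat.odd_add_mul_2. auto. Qed.
Lemma od_even_plus m s : od (2 * m + s) = od s.
Proof. unfold od. rewrite Nat.add_comm, Nat.odd_add_mul_2. auto. Qed.
Lemma od_odd_plus m s : od (2 * m + 1 + s) = (1 - od s)%Z.
Proof. unfold od. replace (2*m+1+s)%nat with (S s + 2*m)%nat by lia. rewrite Nat.odd_add_mul_2, Nat.odd_succ, <- Nat.negb_odd. destruct (Nat.odd s); auto. Qed.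

Lemma dAe s m : d (2 * s) (2 * (2 * m)) = d s (2 * m). Proof. apply E1. Qed.
Lemma dAo s m : d (2 * s) (2 * (2 * m + 1)) = d s (2 * m + 1). Proof. apply E1. Qed.
Lemma dBe s m : d (2 * s) (2 * (2 * m) + 1) = (d s (2 * m) + od s)%Z.
Proof. rewrite E2, od_even_plus, od_even. lia. Qed.
Lemma dBo s m : d (2 * s) (2 * (2 * m + 1) + 1) = (d s (2 * m + 1) - od s)%Z.
Proof. rewrite E2, od_odd_plus, od_odd. lia. Qed.
Lemma dCe s m : d (2 * s + 1) (2 * (2 * m)) = (d s (2 * m) + od s)%Z.
Proof. rewrite E3, od_even_plus. lia. Qed.
Lemma dCo s m : d (2 * s + 1) (2 * (2 * m + 1)) = (d s (2 * m + 1) + (1 - od s))%Z.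
Proof. rewrite E3, od_odd_plus. lia. Qed.
Lemma dDe s m : d (2 * s + 1) (2 * (2 * m) + 1) = d (s + 1) (2 * m).
Proof. rewrite E4, od_even. lia. Qed.
Lemma dDo s m : d (2 * s + 1) (2 * (2 * m + 1) + 1) = (d (s + 1) (2 * m + 1) - 1)%Z.
Proof. rewrite E4, od_odd. lia. Qed.

Lemma d0 n : d 0 n = 0%Z.
Proof. unfold d. rewrite Nat.add_0_r. lia. Qed.

Lemma d1_le m : (d 1 m <= 1)%Z.
Proof.
  induction m as [m IH] using (well_founded_induction lt_wf).
  destruct (Nat.Even_or_Odd m) as [[h ->]|[h ->]].
  - pose proof (E3 0 h) as H. replace (2*0+1)%nat with 1%nat in H by lia. rewrite d0 in H. unfold od in H. rewrite Nat.add_0_r in H.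
    destruct (Nat.odd h); lia.
  - pose proof (E4 0 h) as H. replace (2*0+1)%nat with 1%nat in H by lia. replace (0+1)%nat with 1%nat in H by lia. destruct h. { unfold d. simpl. cbv. discriminate. }
    pose proof (IH (S h) ltac:(lia)). unfold od in H. destruct (Nat.odd (S h)); lia.
Qed.

Lemma lim_invN : is_lim_seq (fun N => / INR N) 0.
Proof.
  pose proof (is_lim_seq_inv _ _ is_lim_seq_INR) as H.
  simpl in H. apply H. discriminate.
Qed.

Lemma lim_half (u : nat -> nat) (h : nat -> nat) (l : R) :
  (forall N, (N <= 2 * h N + 1 /\ 2 * h N <= N + 1)%nat) ->
  is_lim_seq (fun M => INR (u M) / INR M) l ->
  is_lim_seq (fun N => INR (u (h N)) / INR N) (l / 2).
Proof.
  intros Hh Hu.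
  assert (Hfl : filterlim h eventually eventually).
  { intros P [M HP]. exists (2 * M + 1)%nat. intros n Hn. apply HP. specialize (Hh n). lia. }
  assert (Hr : is_lim_seq (fun N => INR (h N) / INR N) (1/2)).
  { apply is_lim_seq_le_le_loc with (u := fun N => 1/2 + (-1) * / INR N) (w := fun N => 1/2 + 1 * / INR N).
    - exists 1%nat. intros n Hn. destruct (Hh n) as [H1 H2].
      apply le_INR in H1. apply le_INR in H2. rewrite ?plus_INR, ?mult_INR in H1, H2. simpl in H1, H2.
      assert (Hn' : 1 <= INR n) by (apply (le_INR 1); auto).
      assert (Hi : INR n * / INR n = 1) by (field; lra).
      assert (Hip : 0 < / INR n) by (apply Rinv_0_lt_compat; lra).
      unfold Rdiv. split; nra.
    - pose proof (is_lim_seq_plus' _ _ _ _ (is_lim_seq_const (1/2)) (is_lim_seq_scal_l _ (-1) 0 lim_invN)) as K.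
      simpl in K. replace (1/2 + (-1) * 0) with (1/2) in K by ring. exact K.
    - pose proof (is_lim_seq_plus' _ _ _ _ (is_lim_seq_const (1/2)) (is_lim_seq_scal_l _ 1 0 lim_invN)) as K.
      simpl in K. replace (1/2 + 1 * 0) with (1/2) in K by ring. exact K. }
  pose proof (is_lim_seq_subseq _ _ _ Hfl Hu) as Hs. simpl in Hs.
  pose proof (is_lim_seq_mult' _ _ _ _ Hs Hr) as Hm.
  replace (l / 2) with (l * (1/2)) by field.
  apply is_lim_seq_ext_loc with (2 := Hm).
  exists 2%nat. intros n Hn. destruct (Hh n) as [H1 H2].
  assert (1 <= h n)%nat by lia.
  assert (0 < INR (h n)) by (apply lt_0_INR; lia).
  assert (0 < INR n) by (apply lt_0_INR; lia).
  field. lra.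
Qed.

Definition cnt (P : nat -> bool) (N : nat) : nat := length (filter P (seq 0 N)).

Lemma cnt_S P N : cnt P (S N) = (cnt P N + (if P N then 1 else 0))%nat.
Proof. unfold cnt. rewrite seq_S, filter_app, length_app. simpl. destruct (P N); reflexivity. Qed.

Lemma cnt_ext P Q N : (forall n, P n = Q n) -> cnt P N = cnt Q N.
Proof. intros H. unfold cnt. f_equal. apply filter_ext. auto. Qed.

Lemma cnt_split P N :
  cnt P N = (cnt (fun m => P (2 * m)%nat) (Nat.div2 (S N)) + cnt (fun m => P (2 * m + 1)%nat) (Nat.div2 N))%nat.
Proof.
  assert (forall M, cnt P (2 * M) = (cnt (fun m => P (2 * m)%nat) (Nat.div2 (S (2*M))) + cnt (fun m => P (2 * m + 1)%nat) (Nat.div2 (2*M)))%nat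
     /\ cnt P (S (2 * M)) = (cnt (fun m => P (2 * m)%nat) (Nat.div2 (S (S (2*M)))) + cnt (fun m => P (2 * m + 1)%nat) (Nat.div2 (S (2*M))))%nat).
  { induction M.
    - split; unfold cnt; simpl; try destruct (P 0%nat); reflexivity.
    - destruct IHM as [IH1 IH2].
      assert (D1 : Nat.div2 (S (2 * S M)) = S M) by apply Nat.div2_succ_double.
      assert (D2 : Nat.div2 (2 * S M) = S M) by apply Nat.div2_double.
      assert (D3 : Nat.div2 (S (S (2 * S M))) = S (S M)) by (replace (S (S (2 * S M))) with (2 * S (S M))%nat by lia; apply Nat.div2_double).
      assert (D4 : Nat.div2 (S (S (2 * M))) = S M) by (replace (S (S (2 * M))) with (2 * S M)%nat by lia; apply Nat.div2_double).
      assert (D5 : Nat.div2 (S (2 * M)) = M) by apply Nat.div2_succ_double.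
      rewrite D4, D5 in IH2.
      rewrite D1, D2, D3.
      assert (C1 : cnt P (2 * S M) = (cnt P (S (2 * M)) + (if P (2 * M + 1)%nat then 1 else 0))%nat).
      { replace (2 * S M)%nat with (S (S (2 * M))) by lia. rewrite cnt_S. replace (2*M+1)%nat with (S (2*M)) by lia. reflexivity. }
      split.
      + rewrite C1, IH2, (cnt_S (fun m => P (2*m+1)%nat) M). cbv beta. lia.
      + rewrite cnt_S, C1, IH2, (cnt_S (fun m => P (2*m+1)%nat) M), (cnt_S (fun m => P (2*m)%nat) (S M)). cbv beta. lia. }
  destruct (Nat.Even_or_Odd N) as [[h ->]|[h ->]].
  - apply H.
  - replace (2 * h + 1)%nat with (S (2 * h)) by lia. apply H.
Qed.

Definition ratio (P : nat -> bool) (N : nat) : R := INR (cnt P N) / INR N.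
Definition ex_dens P := exists l : R, is_lim_seq (ratio P) l.

Lemma dens_lim P : ex_dens P -> is_lim_seq (ratio P) (density P).
Proof.
  intros [l Hl]. unfold density. change (fun N => _) with (ratio P).
  rewrite (is_lim_seq_unique _ _ Hl). exact Hl.
Qed.

Lemma dens_val P (l : R) : is_lim_seq (ratio P) l -> density P = l.
Proof.
  intros Hl. unfold density. change (fun N => _) with (ratio P).
  rewrite (is_lim_seq_unique _ _ Hl). reflexivity.
Qed.

Lemma dens_mix Q P1 P2 : ex_dens P1 -> ex_dens P2 ->
  (forall N, cnt Q N = (cnt P1 (Nat.div2 (S N)) + cnt P2 (Nat.div2 N))%nat) ->
  ex_dens Q /\ density Q = (density P1 + density P2) / 2.
Proof.
  intros H1 H2 HQ.
  apply dens_lim in H1. apply dens_lim in H2.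
  assert (L : is_lim_seq (ratio Q) ((density P1 + density P2) / 2)).
  { replace ((density P1 + density P2) / 2) with (density P1 / 2 + density P2 / 2) by field.
    apply is_lim_seq_ext with (fun N => INR (cnt P1 (Nat.div2 (S N))) / INR N + INR (cnt P2 (Nat.div2 N)) / INR N).
    { intros N. unfold ratio. rewrite HQ, plus_INR. unfold Rdiv. ring. }
    apply is_lim_seq_plus'.
    - apply (lim_half (cnt P1) (fun N => Nat.div2 (S N))). 
      { intros N. destruct (Nat.Even_or_Odd N) as [[h ->]|[h ->]].
        - rewrite Nat.div2_succ_double. lia.
        - replace (S (2*h+1)) with (2 * S h)%nat by lia. rewrite Nat.div2_double. lia. }
      apply H1.
    - apply (lim_half (cnt P2) Nat.div2).
      { intros N. destruct (Nat.Even_or_Odd N) as [[h ->]|[h ->]].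
        - rewrite Nat.div2_double. lia.
        - replace (2*h+1)%nat with (S (2 * h))%nat by lia. rewrite Nat.div2_succ_double. lia. }
      apply H2. }
  split. exists ((density P1 + density P2) / 2). auto. apply dens_val. auto.
Qed.

Definition PA t k := fun n => Z.eqb (d t (2 * n)) k.
Definition PB t k := fun n => Z.eqb (d t (2 * n + 1)) k.

Lemma eqb_shift x e k : Z.eqb (x + e) k = Z.eqb x (k - e).
Proof. destruct (Z.eqb_spec (x+e) k), (Z.eqb_spec x (k-e)); auto; lia. Qed.
Lemma eqb_shiftm x e k : Z.eqb (x - e) k = Z.eqb x (k + e).
Proof. destruct (Z.eqb_spec (x-e) k), (Z.eqb_spec x (k+e)); auto; lia. Qed.

Lemma cntA2 s k N : cnt (PA (2*s) k) N = (cnt (PA s k) (Nat.div2 (S N)) + cnt (PB s k) (Nat.div2 N))%nat.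
Proof.
  rewrite cnt_split. f_equal; apply cnt_ext; intro m; unfold PA, PB.
  - rewrite dAe. reflexivity.
  - rewrite dAo. reflexivity.
Qed.
Lemma cntB2 s k N : cnt (PB (2*s) k) N = (cnt (PA s (k - od s)) (Nat.div2 (S N)) + cnt (PB s (k + od s)) (Nat.div2 N))%nat.
Proof.
  rewrite cnt_split. f_equal; apply cnt_ext; intro m; unfold PA, PB.
  - rewrite dBe, eqb_shift. reflexivity.
  - rewrite dBo, eqb_shiftm. reflexivity.
Qed.
Lemma cntA3 s k N : cnt (PA (2*s+1) k) N = (cnt (PA s (k - od s)) (Nat.div2 (S N)) + cnt (PB s (k - (1 - od s))) (Nat.div2 N))%nat.
Proof.
  rewrite cnt_split. f_equal; apply cnt_ext; intro m; unfold PA, PB.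
  - rewrite dCe, eqb_shift. reflexivity.
  - rewrite dCo, eqb_shift. reflexivity.
Qed.
Lemma cntB3 s k N : cnt (PB (2*s+1) k) N = (cnt (PA (s+1) k) (Nat.div2 (S N)) + cnt (PB (s+1) (k + 1)) (Nat.div2 N))%nat.
Proof.
  rewrite cnt_split. f_equal; apply cnt_ext; intro m; unfold PA, PB.
  - rewrite dDe. reflexivity.
  - rewrite dDo, eqb_shiftm. reflexivity.
Qed.

Lemma cnt_const (b : bool) N : cnt (fun _ => b) N = if b then N else 0%nat.
Proof. induction N. destruct b; reflexivity. rewrite cnt_S, IHN. destruct b; lia. Qed.

Lemma dens_const P (b : bool) : (forall n, P n = b) -> ex_dens P /\ density P = if b then 1 else 0.
Proof.
  intros H.
  assert (L : is_lim_seq (ratio P) ((if b then 1 else 0) : R)).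
  { apply is_lim_seq_ext_loc with (fun _ => (if b then 1 else 0) : R).
    - exists 1%nat. intros n Hn. unfold ratio. rewrite (cnt_ext P (fun _ => b)) by auto.
      rewrite cnt_const. assert (0 < INR n) by (apply lt_0_INR; lia). destruct b; [field; lra | simpl INR; unfold Rdiv; ring].
    - apply is_lim_seq_const. }
  split. eexists; eauto. apply dens_val; auto.
Qed.

Lemma dens_zero P : (forall n, P n = false) -> ex_dens P /\ density P = 0.
Proof. intros H. apply (dens_const P false H). Qed.

Lemma PA0 k n : PA 0 k n = Z.eqb 0 k.
Proof. unfold PA. rewrite d0. reflexivity. Qed.
Lemma PB0 k n : PB 0 k n = Z.eqb 0 k.
Proof. unfold PB. rewrite d0. reflexivity. Qed.
Lemma PB1big k n : (k >= 2)%Z -> PB 1 k n = false.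
Proof. intros Hk. unfold PB. pose proof (d1_le (2*n+1)). apply Z.eqb_neq. lia. Qed.

Definition LimT t := forall k, ex_dens (PA t k) /\ ex_dens (PB t k).

Lemma Lim0 : LimT 0.
Proof.
  intros k. split.
  - apply (proj1 (dens_const _ (Z.eqb 0 k) (PA0 k))).
  - apply (proj1 (dens_const _ (Z.eqb 0 k) (PB0 k))).
Qed.

Lemma LimA_odd s : LimT s -> forall k, ex_dens (PA (2*s+1) k).
Proof.
  intros H k. apply (proj1 (dens_mix _ _ _ (proj1 (H _)) (proj2 (H _)) (cntA3 s k))).
Qed.

Lemma Lim1 : LimT 1.
Proof.
  assert (HA : forall k, ex_dens (PA 1 k)) by (intro k; apply (LimA_odd 0 Lim0 k)).
  assert (HB : forall j : nat, forall k, (Z.of_nat j + k >= 2)%Z -> ex_dens (PB 1 k)).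
  { induction j; intros k Hk.
    - apply dens_zero. intro n. unfold PB. pose proof (d1_le (2*n+1)). apply Z.eqb_neq. lia.
    - pose proof (cntB3 0 k) as E. simpl (2*0+1)%nat in E. simpl (0+1)%nat in E.
      apply (proj1 (dens_mix _ _ _ (HA k) (IHj (k+1)%Z ltac:(lia)) E)). }
  intros k. split. apply HA. apply (HB (Z.to_nat (2 - k))). lia.
Qed.

Lemma LimAll : forall t, LimT t.
Proof.
  intros t. induction t as [t IH] using (well_founded_induction lt_wf).
  destruct (Nat.Even_or_Odd t) as [[s ->]|[s ->]].
  - destruct s. apply Lim0.
    intros k. split.
    + apply (proj1 (dens_mix _ _ _ (proj1 (IH (S s) ltac:(lia) _)) (proj2 (IH (S s) ltac:(lia) _)) (cntA2 (S s) k))).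
    + apply (proj1 (dens_mix _ _ _ (proj1 (IH (S s) ltac:(lia) _)) (proj2 (IH (S s) ltac:(lia) _)) (cntB2 (S s) k))).
  - destruct s. apply Lim1.
    intros k. split.
    + apply LimA_odd. apply IH. lia.
    + apply (proj1 (dens_mix _ _ _ (proj1 (IH (S s + 1)%nat ltac:(lia) _)) (proj2 (IH (S s + 1)%nat ltac:(lia) _)) (cntB3 (S s) k))).
Qed.

Lemma RA2 s k : a_dist (2*s) k = (a_dist s k + b_dist s k) / 2.
Proof. exact (proj2 (dens_mix _ _ _ (proj1 (LimAll s _)) (proj2 (LimAll s _)) (cntA2 s k))). Qed.
Lemma RB2 s k : b_dist (2*s) k = (a_dist s (k - od s) + b_dist s (k + od s)) / 2.
Proof. exact (proj2 (dens_mix _ _ _ (proj1 (LimAll s _)) (proj2 (LimAll s _)) (cntB2 s k))). Qed.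
Lemma RA3 s k : a_dist (2*s+1) k = (a_dist s (k - od s) + b_dist s (k - (1 - od s))) / 2.
Proof. exact (proj2 (dens_mix _ _ _ (proj1 (LimAll s _)) (proj2 (LimAll s _)) (cntA3 s k))). Qed.
Lemma RB3 s k : b_dist (2*s+1) k = (a_dist (s+1) k + b_dist (s+1) (k + 1)) / 2.
Proof. exact (proj2 (dens_mix _ _ _ (proj1 (LimAll (s+1) _)) (proj2 (LimAll (s+1) _)) (cntB3 s k))). Qed.

Lemma RA0 k : a_dist 0 k = if Z.eqb 0 k then 1 else 0.
Proof. exact (proj2 (dens_const _ (Z.eqb 0 k) (PA0 k))). Qed.
Lemma RB0 k : b_dist 0 k = if Z.eqb 0 k then 1 else 0.
Proof. exact (proj2 (dens_const _ (Z.eqb 0 k) (PB0 k))). Qed.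
Lemma RB1big k : (k >= 2)%Z -> b_dist 1 k = 0.
Proof.
  intros Hk. apply (proj2 (dens_zero _ (fun n => PB1big k n Hk))).
Qed.

Definition ZS (f : Z -> R) := ex_series (fun m => f (Z.of_nat m)) /\ ex_series (fun m => f (- Z.of_nat m - 1)%Z).

Lemma exs_plus (a b : nat -> R) : ex_series a -> ex_series b -> ex_series (fun n => a n + b n).
Proof. intros. apply (ex_series_plus a b); auto. Qed.
Lemma exs_scal (c : R) (a : nat -> R) : ex_series a -> ex_series (fun n => c * a n).
Proof. intros. apply (ex_series_scal_l c a); auto. Qed.

Lemma ZS_plus f g : ZS f -> ZS g -> ZS (fun k => f k + g k) /\ sumZ (fun k => f k + g k) = sumZ f + sumZ g.
Proof.
  intros [F1 F2] [G1 G2]. split. split; apply exs_plus; auto.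
  unfold sumZ. rewrite !Series_plus by auto. ring.
Qed.

Lemma ZS_scal c f : ZS f -> ZS (fun k => c * f k) /\ sumZ (fun k => c * f k) = c * sumZ f.
Proof.
  intros [F1 F2]. split. split; apply exs_scal; auto.
  unfold sumZ. rewrite !Series_scal_l. ring.
Qed.

Lemma ZS_shift1 f : (ZS f <-> ZS (fun k => f (k + 1)%Z)) /\ (ZS f -> sumZ (fun k => f (k + 1)%Z) = sumZ f).
Proof.
  set (g := fun m : nat => match m with O => f 0%Z | S m' => f (- Z.of_nat m' - 1)%Z end).
  assert (Epos : (fun m : nat => f (Z.of_nat m + 1)%Z) = (fun m => f (Z.of_nat (S m)))).
  { extensionality m. f_equal. lia. }
  assert (Eneg : (fun m : nat => f (- Z.of_nat m - 1 + 1)%Z) = g).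
  { extensionality m. destruct m. change (g 0%nat) with (f 0%Z). f_equal; lia. change (g (S m)) with (f (- Z.of_nat m - 1)%Z). f_equal; lia. }
  assert (Eg : (fun m => g (S m)) = (fun m => f (- Z.of_nat m - 1)%Z)) by reflexivity.
  unfold ZS. rewrite Epos, Eneg. split.
  - rewrite (ex_series_incr_1 (fun m => f (Z.of_nat m))), (ex_series_incr_1 g), Eg. tauto.
  - intros [H1 H2]. unfold sumZ. rewrite Epos, Eneg.
    rewrite (Series_incr_1 (fun m => f (Z.of_nat m))) by auto.
    assert (ex_series g) by (apply ex_series_incr_1; rewrite Eg; auto).
    rewrite (Series_incr_1 g) by auto. rewrite Eg. simpl. ring.
Qed.

Lemma ZS_shiftm1 f : ZS f -> ZS (fun k => f (k - 1)%Z) /\ sumZ (fun k => f (k - 1)%Z) = sumZ f.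
Proof.
  intros H. set (h := fun k => f (k - 1)%Z).
  assert (Eh : (fun k => h (k + 1)%Z) = f) by (extensionality k; unfold h; f_equal; lia).
  destruct (ZS_shift1 h) as [I Sh]. rewrite Eh in I, Sh. split. apply I; auto.
  symmetry. apply Sh. apply I. auto.
Qed.

Lemma ZS_shift_nat n f : ZS f -> ZS (fun k => f (k + Z.of_nat n)%Z) /\ sumZ (fun k => f (k + Z.of_nat n)%Z) = sumZ f
  /\ ZS (fun k => f (k - Z.of_nat n)%Z) /\ sumZ (fun k => f (k - Z.of_nat n)%Z) = sumZ f.
Proof.
  induction n; intros H.
  - simpl. replace (fun k => f (k + 0)%Z) with f by (extensionality k; f_equal; lia).
    replace (fun k => f (k - 0)%Z) with f by (extensionality k; f_equal; lia). auto.
  - destruct (IHn H) as [A1 [A2 [A3 A4]]].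
    destruct (ZS_shift1 (fun k => f (k + Z.of_nat n)%Z)) as [I Sh].
    destruct (ZS_shiftm1 (fun k => f (k - Z.of_nat n)%Z) A3) as [T U].
    replace (fun k => f (k + Z.of_nat (S n))%Z) with (fun k => f (k + 1 + Z.of_nat n)%Z) by (extensionality k; f_equal; lia).
    replace (fun k => f (k - Z.of_nat (S n))%Z) with (fun k => f (k - 1 - Z.of_nat n)%Z) by (extensionality k; f_equal; lia).
    split; [|split; [|split]].
    + apply I; auto.
    + rewrite Sh; auto.
    + apply T.
    + rewrite U; auto.
Qed.

Lemma ZS_shift e f : ZS f -> ZS (fun k => f (k + e)%Z) /\ sumZ (fun k => f (k + e)%Z) = sumZ f.
Proof.
  intros H. destruct (Z_le_gt_dec 0 e).
  - replace e with (Z.of_nat (Z.to_nat e)) by lia. destruct (ZS_shift_nat (Z.to_nat e) f H) as [A [B _]]. auto.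
  - destruct (ZS_shift_nat (Z.to_nat (- e)) f H) as [_ [_ [A B]]].
    replace (fun k => f (k + e)%Z) with (fun k => f (k - Z.of_nat (Z.to_nat (-e)))%Z) by (extensionality k; f_equal; lia). auto.
Qed.

Definition Mom f := ZS f /\ ZS (fun k => IZR k * f k) /\ ZS (fun k => IZR k ^ 2 * f k).
Definition M0 f := sumZ f.
Definition M1 f := sumZ (fun k => IZR k * f k).
Definition M2 f := sumZ (fun k => IZR k ^ 2 * f k).

Lemma Mom_mix f g : Mom f -> Mom g ->
  Mom (fun k => (f k + g k) / 2) /\ M0 (fun k => (f k + g k) / 2) = (M0 f + M0 g) / 2
  /\ M1 (fun k => (f k + g k) / 2) = (M1 f + M1 g) / 2 /\ M2 (fun k => (f k + g k) / 2) = (M2 f + M2 g) / 2.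
Proof.
  intros [F0 [F1 F2]] [G0 [G1 G2]].
  assert (K : forall u v, ZS u -> ZS v -> ZS (fun k => (u k + v k) / 2) /\ sumZ (fun k => (u k + v k) / 2) = (sumZ u + sumZ v) / 2).
  { intros u v Hu Hv. destruct (ZS_plus u v Hu Hv) as [P1 P2].
    destruct (ZS_scal (/2) _ P1) as [Q1 Q2].
    replace (fun k => (u k + v k) / 2) with (fun k => / 2 * (u k + v k)) by (extensionality k; field).
    split; auto. rewrite Q2, P2. field. }
  unfold Mom, M0, M1, M2.
  replace (fun k => IZR k * ((f k + g k) / 2)) with (fun k => (IZR k * f k + IZR k * g k) / 2) by (extensionality k; field).
  replace (fun k => IZR k ^ 2 * ((f k + g k) / 2)) with (fun k => (IZR k ^ 2 * f k + IZR k ^ 2 * g k) / 2) by (extensionality k; field).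
  destruct (K _ _ F0 G0), (K _ _ F1 G1), (K _ _ F2 G2). tauto.
Qed.

Lemma Mom_shift e f : Mom f ->
  Mom (fun k => f (k - e)%Z) /\ M0 (fun k => f (k - e)%Z) = M0 f
  /\ M1 (fun k => f (k - e)%Z) = M1 f + IZR e * M0 f
  /\ M2 (fun k => f (k - e)%Z) = M2 f + 2 * IZR e * M1 f + IZR e ^ 2 * M0 f.
Proof.
  intros [F0 [F1 F2]]. unfold Mom, M0, M1, M2.
  destruct (ZS_shift (-e) f F0) as [S0 T0].
  replace (fun k => f (k + - e)%Z) with (fun k => f (k - e)%Z) in S0, T0 by (extensionality k; f_equal; lia).
  set (g1 := fun j => IZR j * f j + IZR e * f j).
  assert (G1 : ZS g1 /\ sumZ g1 = sumZ (fun k => IZR k * f k) + IZR e * sumZ f).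
  { destruct (ZS_scal (IZR e) f F0) as [A B]. destruct (ZS_plus _ _ F1 A) as [C D]. split; auto. unfold g1. rewrite D, B. auto. }
  set (g2 := fun j => IZR j ^ 2 * f j + (2 * IZR e * (IZR j * f j) + IZR e ^ 2 * f j)).
  assert (G2 : ZS g2 /\ sumZ g2 = sumZ (fun k => IZR k ^ 2 * f k) + 2 * IZR e * sumZ (fun k => IZR k * f k) + IZR e ^ 2 * sumZ f).
  { destruct (ZS_scal (IZR e ^ 2) f F0) as [A B]. destruct (ZS_scal (2 * IZR e) _ F1) as [A' B'].
    destruct (ZS_plus _ _ A' A) as [C D]. destruct (ZS_plus _ _ F2 C) as [C' D']. split; auto.
    unfold g2. rewrite D', D, B, B'. ring. }
  destruct G1 as [G1a G1b], G2 as [G2a G2b].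
  destruct (ZS_shift (-e) g1 G1a) as [S1 T1].
  destruct (ZS_shift (-e) g2 G2a) as [S2 T2].
  replace (fun k => g1 (k + - e)%Z) with (fun k => IZR k * f (k - e)%Z) in S1, T1.
  2:{ extensionality k. unfold g1. replace (k + - e)%Z with (k - e)%Z by lia. rewrite minus_IZR. ring. }
  replace (fun k => g2 (k + - e)%Z) with (fun k => IZR k ^ 2 * f (k - e)%Z) in S2, T2.
  2:{ extensionality k. unfold g2. replace (k + - e)%Z with (k - e)%Z by lia. rewrite minus_IZR. ring. }
  repeat split; auto.
  - apply S0. - apply S0. - apply S1. - apply S1. - apply S2. - apply S2.
  - rewrite T1, G1b. ring.
  - rewrite T2, G2b. ring.
Qed.

Lemma MixShift f g e1 e2 : Mom f -> Mom g ->
  let h := fun k => (f (k - e1)%Z + g (k - e2)%Z) / 2 in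
  Mom h /\ M0 h = (M0 f + M0 g) / 2
  /\ M1 h = (M1 f + IZR e1 * M0 f + (M1 g + IZR e2 * M0 g)) / 2
  /\ M2 h = (M2 f + 2 * IZR e1 * M1 f + IZR e1 ^ 2 * M0 f + (M2 g + 2 * IZR e2 * M1 g + IZR e2 ^ 2 * M0 g)) / 2.
Proof.
  intros Hf Hg h.
  destruct (Mom_shift e1 f Hf) as [F [F0 [F1 F2]]].
  destruct (Mom_shift e2 g Hg) as [G [G0 [G1 G2]]].
  destruct (Mom_mix _ _ F G) as [H [H0 [H1 H2]]].
  fold h in H, H0, H1, H2. rewrite H0, H1, H2, F0, F1, F2, G0, G1, G2. auto.
Qed.

Lemma FA2 s : a_dist (2*s) = fun k => (a_dist s (k - 0)%Z + b_dist s (k - 0)%Z) / 2.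
Proof. extensionality k. rewrite RA2, !Z.sub_0_r. auto. Qed.
Lemma FB2 s : b_dist (2*s) = fun k => (a_dist s (k - od s)%Z + b_dist s (k - - od s)%Z) / 2.
Proof. extensionality k. rewrite RB2. replace (k - - od s)%Z with (k + od s)%Z by lia. auto. Qed.
Lemma FA3 s : a_dist (2*s+1) = fun k => (a_dist s (k - od s)%Z + b_dist s (k - (1 - od s))%Z) / 2.
Proof. extensionality k. rewrite RA3. auto. Qed.
Lemma FB3 s : b_dist (2*s+1) = fun k => (a_dist (s+1) (k - 0)%Z + b_dist (s+1) (k - -1)%Z) / 2.
Proof. extensionality k. rewrite RB3. replace (k - -1)%Z with (k + 1)%Z by lia. rewrite Z.sub_0_r. auto. Qed.

Lemma exs_zero : ex_series (fun _ : nat => 0).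
Proof.
  apply ex_series_ext with (fun n => 0 * (1/2) ^ n). intros; apply Rmult_0_l.
  apply exs_scal. apply ex_series_geom. rewrite Rabs_pos_eq; lra.
Qed.
Lemma Series_zero : Series (fun _ : nat => 0) = 0.
Proof.
  rewrite <- (Series_ext (fun n => 0 * (1/2) ^ n)) by (intros; ring).
  rewrite Series_scal_l. ring.
Qed.

Lemma exs_fin (a : nat -> R) K : (forall m, (K <= m)%nat -> a m = 0) -> ex_series a.
Proof.
  intros H. apply (ex_series_incr_n a K). apply ex_series_ext with (fun _ => 0).
  intros n. rewrite H; auto. lia. apply exs_zero.
Qed.

Lemma ZS_fin f K : (forall k, (k >= Z.of_nat K \/ k <= - Z.of_nat K - 1)%Z -> f k = 0) -> ZS f.
Proof.
  intros H. split; apply exs_fin with K; intros m Hm; apply H; lia.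
Qed.

Definition delta0 (k : Z) : R := if Z.eqb 0 k then 1 else 0.

Lemma delta_out k : (k <> 0)%Z -> delta0 k = 0.
Proof. intros H. unfold delta0. destruct (Z.eqb_spec 0 k); auto. lia. Qed.

Lemma Mom_delta : Mom delta0 /\ M0 delta0 = 1 /\ M1 delta0 = 0 /\ M2 delta0 = 0.
Proof.
  assert (Z0 : forall p, ZS (fun k => IZR k ^ p * delta0 k)).
  { intros p. apply ZS_fin with 1%nat. intros k Hk. rewrite delta_out by lia. ring. }
  assert (Neg : forall p, Series (fun m => IZR (- Z.of_nat m - 1) ^ p * delta0 (- Z.of_nat m - 1)%Z) = 0).
  { intros p. rewrite <- Series_zero. apply Series_ext. intros m. rewrite delta_out by lia. ring. }
  assert (Pos : forall p, Series (fun m => IZR (Z.of_nat m) ^ p * delta0 (Z.of_nat m)) = 0 ^ p).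
  { intros p. rewrite Series_incr_1 by apply (Z0 p).
    rewrite (Series_ext _ (fun _ => 0)). rewrite Series_zero. unfold delta0. simpl. ring.
    intros m. rewrite delta_out by lia. ring. }
  assert (S : forall p, sumZ (fun k => IZR k ^ p * delta0 k) = 0 ^ p).
  { intros p. unfold sumZ. rewrite Pos, Neg. ring. }
  assert (E0 : delta0 = (fun k => IZR k ^ 0 * delta0 k)) by (extensionality k; simpl; ring).
  assert (E1 : (fun k => IZR k * delta0 k) = (fun k => IZR k ^ 1 * delta0 k)) by (extensionality k; simpl; ring).
  unfold Mom, M0, M1, M2. rewrite E0 at 1 2. rewrite E1. rewrite !S.
  split. split; [apply Z0|split; apply Z0]. simpl. lra.
Qed.

Lemma pow32 m : 1 + INR m / 2 + INR m * (INR m - 1) / 8 <= (3/2) ^ m.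
Proof.
  induction m. simpl. lra.
  rewrite S_INR. simpl pow. assert (0 <= INR m) by apply pos_INR.
  assert (INR m = 0 \/ 1 <= INR m).
  { destruct m. left; auto. right. apply (le_INR 1). lia. }
  nra.
Qed.

Lemma poly_geom m : (INR m + 1) ^ 2 * (1/2) ^ m <= 16 * (3/4) ^ m.
Proof.
  replace (3/4) with (1/2 * (3/2)) by field. rewrite Rpow_mult_distr.
  pose proof (pow32 m). assert (0 <= INR m) by apply pos_INR.
  assert (0 < (1/2)^m) by (apply pow_lt; lra).
  assert ((INR m + 1) ^ 2 <= 16 * (3/2)^m) by nra.
  nra.
Qed.

Lemma exs_b1 (g : nat -> R) (c : R) : (forall m, Rabs (g m) <= (INR m + 1) ^ 2) ->
  ex_series (fun m => g m * (c * (1/2) ^ (m + 1))).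
Proof.
  intros Hg. apply (@ex_series_le R_AbsRing R_CompleteNormedModule _ (fun m => (Rabs c * 16) * (3/4) ^ m)).
  - intros m. change norm with Rabs. simpl. unfold abs. simpl.
    rewrite !Rabs_mult. rewrite (Rabs_pos_eq ((1/2) ^ (m+1))) by (apply pow_le; lra).
    rewrite pow_add. pose proof (poly_geom m). pose proof (Hg m).
    assert (0 < (1/2)^m) by (apply pow_lt; lra). pose proof (Rabs_pos c). pose proof (Rabs_pos (g m)).
    assert (Rabs (g m) * (1/2)^m <= 16 * (3/4)^m) by nra. assert (Rabs c * (Rabs (g m) * (1/2)^m) <= Rabs c * (16 * (3/4)^m)) by (apply Rmult_le_compat_l; auto). assert (0 <= (3/4)^m) by (apply pow_le; lra). simpl pow. nra.
  - apply exs_scal. apply ex_series_geom. rewrite Rabs_pos_eq; lra.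
Qed.

Lemma a1_val k : a_dist 1 k = (delta0 k + delta0 (k - 1)) / 2.
Proof.
  pose proof (RA3 0 k) as H. change (2*0+1)%nat with 1%nat in H. rewrite H.
  change (od 0) with 0%Z. rewrite RA0, RB0. unfold delta0. replace (k - 0)%Z with k by lia. replace (k - (1 - 0))%Z with (k - 1)%Z by lia. reflexivity.
Qed.

Lemma b1_rec k : b_dist 1 k = (a_dist 1 k + b_dist 1 (k + 1)) / 2.
Proof. pose proof (RB3 0 k) as H. change (2*0+1)%nat with 1%nat in H. change (0+1)%nat with 1%nat in H. exact H. Qed.

Lemma b1_neg m : b_dist 1 (- Z.of_nat m - 1) = b_dist 1 0 * (1/2) ^ (m + 1).
Proof.
  induction m.
  - rewrite b1_rec, a1_val. simpl. rewrite !delta_out by lia. field.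
  - rewrite b1_rec, a1_val. rewrite !delta_out by lia.
    replace (- Z.of_nat (S m) - 1 + 1)%Z with (- Z.of_nat m - 1)%Z by lia. rewrite IHm.
    replace (S m + 1)%nat with (S (m + 1)) by lia. simpl pow. field.
Qed.

Lemma IZR_neg m : IZR (- Z.of_nat m - 1) = - (INR m + 1).
Proof. rewrite minus_IZR, opp_IZR, <- INR_IZR_INZ. ring. Qed.

Lemma Mom_b1 : Mom (b_dist 1).
Proof.
  assert (Pos : forall p, ex_series (fun m => IZR (Z.of_nat m) ^ p * b_dist 1 (Z.of_nat m))).
  { intros p. apply exs_fin with 2%nat. intros m Hm. rewrite RB1big by lia. ring. }
  assert (Neg : forall p, (p <= 2)%nat -> ex_series (fun m => IZR (- Z.of_nat m - 1) ^ p * b_dist 1 (- Z.of_nat m - 1))).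
  { intros p Hp. apply ex_series_ext with (fun m => IZR (- Z.of_nat m - 1) ^ p * (b_dist 1 0 * (1/2) ^ (m+1))).
    { intros m. rewrite b1_neg. auto. }
    apply exs_b1. intros m. rewrite IZR_neg. rewrite <- RPow_abs. rewrite Rabs_Ropp.
    assert (0 <= INR m) by apply pos_INR. rewrite Rabs_pos_eq by lra.
    destruct p as [|[|[|p]]]; simpl; nra || lia. }
  unfold Mom, ZS. split; [|split]; split.
  - apply ex_series_ext with (2 := Pos 0%nat). intros; simpl; ring.
  - apply ex_series_ext with (2 := Neg 0%nat ltac:(lia)). intros; simpl; ring.
  - apply ex_series_ext with (2 := Pos 1%nat). intros; simpl; ring.
  - apply ex_series_ext with (2 := Neg 1%nat ltac:(lia)). intros; simpl; ring.
  - apply Pos.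
  - apply (Neg 2%nat). lia.
Qed.

Definition MomT t := Mom (a_dist t) /\ Mom (b_dist t).

Lemma FA0 : a_dist 0 = delta0. Proof. extensionality k. apply RA0. Qed.
Lemma FB0 : b_dist 0 = delta0. Proof. extensionality k. apply RB0. Qed.

Lemma MomAll t : MomT t.
Proof.
  induction t as [t IH] using (well_founded_induction lt_wf).
  destruct (Nat.Even_or_Odd t) as [[s ->]|[s ->]].
  - destruct s. { change (2*0)%nat with 0%nat. split; [rewrite FA0|rewrite FB0]; apply Mom_delta. }
    destruct (IH (S s) ltac:(lia)) as [Ha Hb]. split.
    + rewrite FA2. apply (MixShift _ _ _ _ Ha Hb).
    + rewrite FB2. apply (MixShift _ _ _ _ Ha Hb).
  - destruct (IH s ltac:(lia)) as [Ha Hb]. split.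
    + rewrite FA3. apply (MixShift _ _ _ _ Ha Hb).
    + destruct s. { change (2*0+1)%nat with 1%nat. apply Mom_b1. }
      destruct (IH (S s + 1)%nat ltac:(lia)) as [Ha' Hb'].
      rewrite FB3. apply (MixShift _ _ _ _ Ha' Hb').
Qed.

Definition al (t : nat) : R := IZR (od t) / 2.

Lemma od01 s : od s = 0%Z \/ od s = 1%Z.
Proof. unfold od. destruct (Nat.odd s); auto. Qed.

Lemma od_2s s : od (2 * s) = 0%Z. Proof. apply od_even. Qed.
Lemma od_2s1 s : od (2 * s + 1) = 1%Z. Proof. apply od_odd. Qed.
Lemma od_S s : od (s + 1) = (1 - od s)%Z.
Proof. destruct (Nat.Even_or_Odd s) as [[h ->]|[h ->]].
  - rewrite od_2s1, od_2s. auto.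
  - replace (2*h+1+1)%nat with (2*(h+1))%nat by lia. rewrite od_2s, od_2s1. auto. Qed.

Definition ValT t := M0 (a_dist t) = 1 /\ M0 (b_dist t) = 1 /\ M1 (a_dist t) = al t /\ M1 (b_dist t) = - al t.

Lemma ValAll t : ValT t.
Proof.
  induction t as [t IH] using (well_founded_induction lt_wf).
  destruct (Nat.Even_or_Odd t) as [[s ->]|[s ->]].
  - destruct s.
    { change (2*0)%nat with 0%nat. unfold ValT, al. rewrite FA0, FB0. destruct Mom_delta as [_ [A [B _]]]. rewrite A, B. change (od 0) with 0%Z. simpl. lra. }
    destruct (IH (S s) ltac:(lia)) as [A0 [B0 [A1 B1]]].
    destruct (MomAll (S s)) as [Ha Hb].
    destruct (MixShift _ _ 0 0 Ha Hb) as [_ [X0 [X1 _]]].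
    destruct (MixShift _ _ (od (S s)) (- od (S s)) Ha Hb) as [_ [Y0 [Y1 _]]].
    unfold ValT, al. rewrite od_2s. rewrite FA2, FB2. rewrite X0, X1, Y0, Y1, A0, B0, A1, B1.
    rewrite opp_IZR. simpl. lra.
  - destruct (IH s ltac:(lia)) as [A0 [B0 [A1 B1]]].
    destruct (MomAll s) as [Ha Hb].
    destruct (MixShift _ _ (od s) (1 - od s) Ha Hb) as [_ [X0 [X1 _]]].
    assert (VA0 : M0 (a_dist (2*s+1)) = 1) by (rewrite FA3, X0, A0, B0; lra).
    assert (VA1 : M1 (a_dist (2*s+1)) = 1/2) by (rewrite FA3, X1, A0, B0, A1, B1, minus_IZR; unfold al; simpl; lra).
    unfold ValT, al. rewrite od_2s1. rewrite VA0, VA1.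
    destruct s.
    + change (2*0+1)%nat with 1%nat in *.
      destruct (MomAll 1) as [Ha1 Hb1].
      destruct (MixShift _ _ 0 (-1) Ha1 Hb1) as [_ [Y0 [Y1 _]]].
      pose proof (FB3 0) as F. change (2*0+1)%nat with 1%nat in F. change (0+1)%nat with 1%nat in F.
      rewrite <- F in Y0, Y1. rewrite VA0 in Y0. rewrite VA1 in Y1.
      simpl IZR in *. assert (M0 (b_dist 1) = 1) by lra. split; auto. split; auto. lra.
    + destruct (IH (S s + 1)%nat ltac:(lia)) as [C0 [D0 [C1 D1]]].
      destruct (MomAll (S s + 1)) as [Ha1 Hb1].
      destruct (MixShift _ _ 0 (-1) Ha1 Hb1) as [_ [Y0 [Y1 _]]].
      rewrite FB3, Y0, Y1, C0, D0, C1, D1. simpl IZR. split; lra.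
Qed.

Lemma Rabs_iff x b : Rabs x <= b <-> - b <= x <= b.
Proof. unfold Rabs. destruct (Rcase_abs x); split; intros; lra. Qed.

Definition Qa t := M2 (a_dist t).
Definition Qb t := M2 (b_dist t).
Definition PP t := (Qa t + Qb t) / 2.

Lemma QA2 s : Qa (2 * s) = PP s.
Proof.
  destruct (MomAll s) as [Ha Hb]. destruct (MixShift _ _ 0 0 Ha Hb) as [_ [_ [_ X]]].
  unfold PP, Qa, Qb. rewrite FA2, X. simpl IZR. lra.
Qed.

Lemma QB2 s : Qb (2 * s) = PP s + 2 * IZR (od s) ^ 2.
Proof.
  destruct (MomAll s) as [Ha Hb]. destruct (MixShift _ _ (od s) (- od s) Ha Hb) as [_ [_ [_ X]]].
  destruct (ValAll s) as [A0 [B0 [A1 B1]]].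
  unfold PP, Qa, Qb. rewrite FB2, X, A0, B0, A1, B1. unfold al. rewrite opp_IZR. field.
Qed.

Lemma QA3 s : Qa (2 * s + 1) = PP s + (2 * IZR (od s) ^ 2 - (1 - IZR (od s)) * IZR (od s) + (1 - IZR (od s)) ^ 2) / 2.
Proof.
  destruct (MomAll s) as [Ha Hb]. destruct (MixShift _ _ (od s) (1 - od s) Ha Hb) as [_ [_ [_ X]]].
  destruct (ValAll s) as [A0 [B0 [A1 B1]]].
  unfold PP, Qa, Qb. rewrite FA3, X, A0, B0, A1, B1. unfold al. rewrite minus_IZR. field.
Qed.

Lemma QB3 s : Qb (2 * s + 1) = PP (s + 1) + (2 * al (s + 1) + 1) / 2.
Proof.
  destruct (MomAll (s+1)) as [Ha Hb]. destruct (MixShift _ _ 0 (-1) Ha Hb) as [_ [_ [_ X]]].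
  pose proof (FB3 s) as F.
  destruct (ValAll (s+1)) as [A0 [B0 [A1 B1]]].
  unfold PP, Qa, Qb. rewrite F, X, B0, B1. simpl IZR. field.
Qed.

Lemma PP2 s : PP (2 * s) = PP s + IZR (od s) ^ 2.
Proof. unfold PP at 1. rewrite QA2, QB2. field. Qed.

Lemma PP21 s : PP (2 * s + 1) = (PP s + PP (s + 1)) / 2 + 3/4.
Proof.
  unfold PP at 1. rewrite QA3, QB3. unfold al. rewrite od_S, minus_IZR.
  destruct (od01 s) as [-> | ->]; simpl IZR; field.
Qed.

Lemma Dbound s : Rabs (PP (s + 1) - PP s) <= 3/2.
Proof.
  induction s as [s IH] using (well_founded_induction lt_wf).
  destruct (Nat.Even_or_Odd s) as [[u ->]|[u ->]].
  - rewrite PP21, PP2.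
    destruct u.
    + change (2*0)%nat with 0%nat. change (0+1)%nat with 1%nat.
      pose proof (PP21 0) as H. change (2*0+1)%nat with 1%nat in H. change (0+1)%nat with 1%nat in H.
      change (od 0) with 0%Z. simpl IZR.
      assert (PP 1 - PP 0 = 3/2) by lra.
      replace ((PP 0 + PP 1) / 2 + 3 / 4 - (PP 0 + 0 ^ 2)) with (3/2) by lra. rewrite Rabs_pos_eq; lra.
    + pose proof (IH (S u) ltac:(lia)) as H.
      apply Rabs_iff in H. apply Rabs_iff.
      destruct (od01 (S u)) as [-> | ->]; simpl IZR; lra.
  - replace (2 * u + 1 + 1)%nat with (2 * (u + 1))%nat by lia.
    rewrite PP2, PP21.
    pose proof (IH u ltac:(lia)) as H.
    apply Rabs_iff in H. apply Rabs_iff.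
    destruct (od01 (u + 1)) as [-> | ->]; simpl IZR; lra.
Qed.

Lemma var_eq p : Mom p -> M0 p = 1 -> varZ p = M2 p - (M1 p) ^ 2.
Proof.
  intros [H0 [H1 H2]] E. unfold varZ. change (meanZ p) with (M1 p). set (mu := M1 p).
  destruct (ZS_scal (-2 * mu) _ H1) as [A B].
  destruct (ZS_scal (mu ^ 2) _ H0) as [C D].
  destruct (ZS_plus _ _ A C) as [F G].
  destruct (ZS_plus _ _ H2 F) as [I J].
  replace (fun k => (IZR k - mu) ^ 2 * p k) with
    (fun k => IZR k ^ 2 * p k + (-2 * mu * (IZR k * p k) + mu ^ 2 * p k)) by (extensionality k; ring).
  rewrite J, G, B, D. unfold M2, M0 in *. fold mu. rewrite E. unfold mu, M1. ring.
Qed.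

Theorem lemma3p6 : forall t : nat, Rabs (v_alpha t - v_beta t) <= 48.
Proof.
  intros t. unfold v_alpha, v_beta.
  destruct (MomAll t) as [Ha Hb]. destruct (ValAll t) as [A0 [B0 [A1 B1]]].
  rewrite (var_eq _ Ha A0), (var_eq _ Hb B0), A1, B1.
  replace (M2 (a_dist t) - al t ^ 2 - (M2 (b_dist t) - (- al t) ^ 2)) with (Qa t - Qb t) by (unfold Qa, Qb; ring).
  destruct (Nat.Even_or_Odd t) as [[s ->]|[s ->]].
  - rewrite QA2, QB2. destruct (od01 s) as [-> | ->]; simpl IZR; apply Rabs_iff; lra.
  - rewrite QA3, QB3. pose proof (Dbound s) as H. apply Rabs_iff in H. apply Rabs_iff.
    unfold al. rewrite od_S, minus_IZR.
    destruct (od01 s) as [-> | ->]; simpl IZR; lra.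
Qed.
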